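(* Let $n\ge2$, $k\ge1$. Let $\overline C^{\circ}=\{f\in M:\langle f-r^{2k},g-r^{2k}\rangle\le1\ \forall g\in\overline C\}$ be the polar of $\overline C$ in $M$ with respect to the origin $r^{2k}$. Then $\overline C^{\circ}=-\overline C^{*}+2r^{2k}$.
   Context: $P_{n,2k}$: real forms of degree $2k$ in $n$ variables; $r^{2k}=(x_1^2+\dots+x_n^2)^k$; $\langle f,g\rangle=\int_{S^{n-1}}fg\,d\sigma$ with $\sigma$ the rotation-invariant probability measure on $S^{n-1}$. $M=\{f\in P_{n,2k}:\int f\,d\sigma=1\}$, $C$ the cone of nonnegative forms, $\overline C=C\cap M$, $C^*=\{f:\langle f,g\rangle\ge0\ \forall g\in C\}$, $\overline C^*=C^*\cap M$. *)

(* Defs.v *)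
From HB Require Import structures.
From mathcomp Require Import all_boot all_order all_algebra.
From mathcomp Require Import mpoly.
From mathcomp Require Import all_classical all_reals all_analysis.

Set Implicit Arguments.
Unset Strict Implicit.
Unset Printing Implicit Defensive.
Import Order.TTheory GRing.Theory Num.Theory.
Import numFieldNormedType.Exports.
Local Open Scope classical_set_scope.
Local Open Scope ring_scope.

Section Forms.
Variable R : realType.

Definition poly_n (n : nat) := mpoly.mpoly n R.

Definition ev (n : nat) (x : 'I_n -> R) (p : poly_n n) : R := mpoly.meval x p.

(* P_{n,2k}: forms (homogeneous polynomials, including 0) of degree 2k. *)
Definition P (n k : nat) : set (poly_n n) :=
  [set p | p \is mpoly.ishomog1 (2 * k) (mpoly.mpoly_mdeg__canonical__mpoly_Measure n)].
Arguments P : clear implicits.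

Definition r2k (n k : nat) : poly_n n :=
  (\sum_(i < n) (@mpoly.mpolyX n R (mpoly.mnm1 i)) ^+ 2) ^+ k.
Arguments r2k : clear implicits.

(* n-dimensional Lebesgue integral over R^n, as the iterated Lebesgue
   integral over R (Fubini); points of R^n are encoded as sequences. *)
Fixpoint iter_int (m : nat) (F : seq R -> R) : R :=
  match m with
  | 0 => F [::]
  | m'.+1 => Rintegral (@lebesgue_measure R) setT
               (fun t => iter_int m' (fun s => F (t :: s)))
  end.

Definition leb_int (n : nat) (F : ('I_n -> R) -> R) : R :=
  iter_int n (fun s => F (fun i => nth 0 s i)).

Definition sqnorm (n : nat) (x : 'I_n -> R) : R := \sum_(i < n) x i ^+ 2.

Definition ind_ball (n : nat) (x : 'I_n -> R) : R :=
  if sqnorm x <= 1 then 1 else 0.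

(* Integral against sigma, the rotation-invariant probability measure on
   S^{n-1}, realised as the normalised cone measure: sigma is the image of the
   uniform probability on the unit ball B under x |-> x/|x|, i.e.
   sigma(A) = vol({t a : a in A, 0 < t <= 1}) / vol(B). *)
Definition sph_int (n : nat) (h : ('I_n -> R) -> R) : R :=
  leb_int (fun x => ind_ball x * h (fun i => x i / Num.sqrt (sqnorm x)))
  / leb_int (@ind_ball n).

Definition inner (n : nat) (f g : poly_n n) : R :=
  sph_int (fun x => ev x f * ev x g).

Definition avg (n : nat) (f : poly_n n) : R := sph_int (fun x => ev x f).

Definition Mset (n k : nat) : set (poly_n n) := [set f | P n k f /\ avg f = 1].
Arguments Mset : clear implicits.

Definition Ccone (n k : nat) : set (poly_n n) :=
  [set f | P n k f /\ forall x : 'I_n -> R, 0 <= ev x f].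
Arguments Ccone : clear implicits.
Definition Cbar (n k : nat) : set (poly_n n) := Ccone n k `&` Mset n k.
Arguments Cbar : clear implicits.

Definition Cstar (n k : nat) : set (poly_n n) :=
  [set f | P n k f /\ forall g, Ccone n k g -> 0 <= inner f g].
Arguments Cstar : clear implicits.
Definition Cstarbar (n k : nat) : set (poly_n n) := Cstar n k `&` Mset n k.
Arguments Cstarbar : clear implicits.

Definition polar_Cbar (n k : nat) : set (poly_n n) :=
  [set f | Mset n k f /\
     forall g, Cbar n k g -> inner (f - r2k n k) (g - r2k n k) <= 1].
Arguments polar_Cbar : clear implicits.

End Forms.

(* Main.v *)
Require Import Defs.
From HB Require Import structures.
From mathcomp Require Import all_boot all_order all_algebra.
From mathcomp Require Import mpoly.
From mathcomp Require Import all_classical all_reals all_analysis.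
From mathcomp Require Import measurable_realfun.
From mathcomp Require Import ring lra.
Import Order.TTheory GRing.Theory Num.Theory.
Import numFieldNormedType.Exports.
Set Implicit Arguments.
Unset Strict Implicit.
Local Open Scope classical_set_scope.
Local Open Scope ring_scope.

Section Integ.
Variable R : realType.
Local Notation leb := (@lebesgue_measure R).

Lemma iter_int_ext m (F G : seq R -> R) :
  (forall s, size s = m -> F s = G s) -> iter_int m F = iter_int m G.
Proof.
elim: m F G => [|m IH] F G FG /=; first exact: FG.
congr Rintegral; apply/funext => t; apply: IH => s hs; by apply: FG => /=; rewrite hs.
Qed.

Lemma iter_int0 m : iter_int m (fun _ : seq R => 0) = 0.
Proof.
elim: m => [|m IH] //=; rewrite IH Rintegral_cst // mul0r //.
Qed.

Let A1 : set R := `[(-1)%R, 1%R]%classic.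

Let mA1 : measurable A1.
Proof. exact: measurable_itv. Qed.

Lemma leb_A1 : (lebesgue_measure A1 = 2%:E)%E.
Proof.
rewrite /A1 lebesgue_measure_itv /= lte_fin.
rewrite (_ : (-1 < 1) = true); last by apply/idP; rewrite gtrN.
by rewrite -EFinD opprK.
Qed.

Lemma box_bound (f : R -> R) C : measurable_fun setT f ->
  (forall t, `|f t| <= C) -> (forall t, 1 < `|t| -> f t = 0) ->
  (\int[leb]_x (`|f x|)%:E <= (C * 2)%:E)%E.
Proof.
move=> mf fC f0.
have C0 : 0 <= C by apply: le_trans (fC 0).
apply: (@le_trans _ _ (\int[leb]_x (C%:E * (\1_A1 x)%:E))%E).
  apply: ge0_le_integral => //.
  - apply/measurable_EFinP; apply: measurableT_comp => //.
  - apply: emeasurable_funM => //; apply/measurable_EFinP; exact: measurable_indic.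
  - move=> x _; rewrite /= -EFinM lee_fin /indic.
    case: (boolP (x \in A1)) => xA /=.
      by rewrite mulr1.
    rewrite f0 ?normr0 ?mulr0 //.
    move: xA; rewrite /A1 => /negP; rewrite inE /= in_itv /= -ler_norml => /negP.
    by rewrite -ltNge.
rewrite ge0_integralZl_EFin //.
- have hI : (\int[leb]_x (\1_A1 x)%:E = 2%:E)%E.
    by rewrite integral_indic // setIT; exact: leb_A1.
  by rewrite hI -EFinM.
- by apply/measurable_EFinP; exact: measurable_indic.
Qed.

Lemma box_integrable (f : R -> R) C : measurable_fun setT f ->
  (forall t, `|f t| <= C) -> (forall t, 1 < `|t| -> f t = 0) ->
  leb.-integrable setT (EFin \o f).
Proof.
move=> mf fC f0; apply/integrableP; split; first exact/measurable_EFinP.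
by apply: (le_lt_trans (box_bound mf fC f0)); exact: ltry.
Qed.

Lemma box_Rint_bound (f : R -> R) C : measurable_fun setT f ->
  (forall t, `|f t| <= C) -> (forall t, 1 < `|t| -> f t = 0) ->
  `|Rintegral leb setT f| <= C * 2.
Proof.
move=> mf fC f0.
apply: le_trans (le_normr_Rintegral _ (box_integrable mf fC f0)) _ => //.
rewrite /Rintegral.
have hv := box_bound mf fC f0.
have v0 : (0 <= \int[leb]_x (`|f x|)%:E)%E by apply: integral_ge0 => x _; rewrite lee_fin.
rewrite -[X in _ <= X]/(fine (C * 2)%:E).
apply: fine_le => //; rewrite ge0_fin_numE //; apply: le_lt_trans hv _; exact: ltry.
Qed.

Lemma idLR : measurable_fun (setT : set (measurableTypeR R)) (fun x : measurableTypeR R => (x : R)).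
Proof. exact: measurable_id. Qed.
Lemma idLR' : measurable_fun (setT : set R) (fun x : R => (x : measurableTypeR R)).
Proof. exact: measurable_id. Qed.

Lemma iter_meas m : forall d (X : measurableType d) (H : X -> seq R -> R) B,
  (forall x s, `|H x s| <= B) ->
  (forall x s, size s = m -> has (fun t => 1 < `|t|) s -> H x s = 0) ->
  measurable_fun setT (fun p : X * m.-tuple R => H p.1 (tval p.2)) ->
  measurable_fun setT (fun x => iter_int m (H x)) /\
  (forall x, `|iter_int m (H x)| <= B * 2 ^+ m).
Proof.
elim: m => [|m IH] d X H B HB Hs Hm.
  split; last by move=> x; rewrite expr0 mulr1 /=.
  rewrite /=.
  have -> : (fun x => H x [::]) = (fun p : X * 0.-tuple R => H p.1 (tval p.2)) \o (fun x => (x, [tuple])) by [].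
  apply: measurableT_comp => //.
pose K := fun q : X * measurableTypeR R => iter_int m (fun s => H q.1 (q.2 :: s)).
have [mK bK] : measurable_fun setT K /\ (forall q, `|K q| <= B * 2 ^+ m).
  apply: (IH _ _ (fun q s => H q.1 (q.2 :: s)) B) => //.
    by move=> q s hs hh; apply: Hs => /=; rewrite ?hs // hh orbT.
  have -> : (fun p : (X * measurableTypeR R) * m.-tuple R => H p.1.1 (p.1.2 :: tval p.2)) =
    (fun p : X * m.+1.-tuple R => H p.1 (tval p.2)) \o
    (fun p : (X * measurableTypeR R) * m.-tuple R => (p.1.1, [tuple of (p.1.2 : R) :: p.2])) by [].
  apply: measurableT_comp => //.
  apply: measurable_fun_pair.
    exact: measurableT_comp.
  apply: measurable_cons => //.
  apply: (measurableT_comp idLR).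
  exact: measurableT_comp.
have K0 : forall x t, 1 < `|t| -> K (x, t) = 0.
  move=> x t ht; rewrite /K (@iter_int_ext _ _ (fun _ => 0)) ?iter_int0 //.
  by move=> s hs /=; apply: Hs; rewrite /= ?hs // ht.
have mKx : forall x, measurable_fun setT (fun t : R => K (x, t)).
  move=> x; apply: (measurableT_comp mK).
  apply: measurable_fun_pair; first exact: measurable_cst.
  exact: idLR'.
split; last first.
  move=> x; rewrite /= exprS mulrCA mulrC.
  exact: (box_Rint_bound (mKx x) (fun t => bK (x, t)) (K0 x)).
have -> : (fun x => iter_int m.+1 (H x)) =
  (fun x => fine ((\int[leb]_t ((EFin \o K)^\+ (x, t))) -
                  (\int[leb]_t ((EFin \o K)^\- (x, t))))%E).
  apply/funext => x; rewrite /= /Rintegral integralE; congr (fine (_ - _)); apply: eq_integral => t _; by rewrite ?funeposE ?funenegE.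
apply: measurableT_comp => //.
apply: emeasurable_funB.
  apply: (@measurable_fun_fubini_tonelli_F _ _ _ _ _ leb ((EFin \o K)^\+)%E).
    by apply: measurable_funepos; exact/measurable_EFinP.
  by move=> q; exact: funepos_ge0.
apply: (@measurable_fun_fubini_tonelli_F _ _ _ _ _ leb ((EFin \o K)^\-)%E).
  by apply: measurable_funeneg; exact/measurable_EFinP.
by move=> q; exact: funeneg_ge0.
Qed.

Definition good m (F : seq R -> R) :=
  [/\ exists B, forall s, `|F s| <= B,
      forall s, size s = m -> has (fun t => 1 < `|t|) s -> F s = 0 &
      measurable_fun setT (fun s : m.-tuple R => F s)].

Lemma good_slice m F t : good m.+1 F -> good m (fun s => F (t :: s)).
Proof.
move=> [[B hB] hs hm]; split.
- by exists B.
- by move=> s hsz hh; apply: hs; rewrite /= ?hsz // hh orbT.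
- have -> : (fun s : m.-tuple R => F (t :: s)) =
     (fun s : m.+1.-tuple R => F s) \o (fun s : m.-tuple R => [tuple of t :: s]) by [].
  apply: measurableT_comp => //.
  by apply: measurable_cons => //; exact: measurable_cst.
Qed.

Lemma good_integrable m F : good m.+1 F ->
  leb.-integrable setT (EFin \o (fun t => iter_int m (fun s => F (t :: s)))).
Proof.
move=> [[B hB] hs hm].
have hs' : forall (t : R) s, size s = m -> has (fun t => 1 < `|t|) s -> F (t :: s) = 0.
  by move=> t s hsz hh; apply: hs; rewrite /= ?hsz // hh orbT.
have hm' : measurable_fun setT (fun p : R * m.-tuple R => F (p.1 :: tval p.2)).
  have -> : (fun p : R * m.-tuple R => F (p.1 :: tval p.2)) =
     (fun s : m.+1.-tuple R => F s) \o (fun p : R * m.-tuple R => [tuple of p.1 :: p.2]) by [].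
  apply: measurableT_comp => //.
  by apply: measurable_cons.
have [mI bI] := @iter_meas m _ R (fun t s => F (t :: s)) B (fun _ _ => hB _) hs' hm'.
apply: (box_integrable mI bI) => t ht.
rewrite (@iter_int_ext _ _ (fun _ => 0)) ?iter_int0 //.
by move=> s hsz; apply: hs; rewrite /= ?hsz // ht.
Qed.

Lemma goodD m F G : good m F -> good m G -> good m (fun s => F s + G s).
Proof.
move=> [[B1 h1] s1 m1] [[B2 h2] s2 m2]; split.
- by exists (B1 + B2) => s; apply: le_trans (ler_normD _ _) _; exact: lerD.
- by move=> s hsz hh; rewrite s1 ?s2 ?addr0.
- exact: measurable_funD.
Qed.

Lemma goodZ m c F : good m F -> good m (fun s => c * F s).
Proof.
move=> [[B1 h1] s1 m1]; split.
- by exists (`|c| * B1) => s; rewrite normrM; apply: ler_wpM2l.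
- by move=> s hsz hh; rewrite s1 ?mulr0.
- by apply: measurable_funM => //; exact: measurable_cst.
Qed.

Lemma iter_intD m F G : good m F -> good m G ->
  iter_int m (fun s => F s + G s) = iter_int m F + iter_int m G.
Proof.
elim: m F G => [|m IH] F G gF gG //=.
rewrite (_ : (fun t => iter_int m (fun s => F (t :: s) + G (t :: s))) =
   (fun t => iter_int m (fun s => F (t :: s)) + iter_int m (fun s => G (t :: s)))).
  by apply: RintegralD => //; exact: good_integrable.
by apply/funext => t; apply: IH; exact: good_slice.
Qed.

Lemma iter_intZ m c F : good m F ->
  iter_int m (fun s => c * F s) = c * iter_int m F.
Proof.
elim: m F => [|m IH] F gF //=.
rewrite (_ : (fun t => iter_int m (fun s => c * F (t :: s))) =
   (fun t => c * iter_int m (fun s => F (t :: s)))).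
  by apply: RintegralZl => //; exact: good_integrable.
by apply/funext => t; apply: IH; exact: good_slice.
Qed.

Lemma iter_int_ge0 m (F : seq R -> R) : (forall s, 0 <= F s) -> 0 <= iter_int m F.
Proof.
elim: m F => [|m IH] F F0 //=.
by apply: Rintegral_ge0 => t _; apply: IH.
Qed.

Lemma iter_int_pt m (D : seq R -> R) : (forall s, size s = m.+1 -> has (fun x => x != 0) s -> D s = 0) ->
  iter_int m.+1 D = 0.
Proof.
elim: m D => [|m IH] D hD.
  rewrite /= (_ : (fun t => D [:: t]) = (fun t => D [:: t]) \_ [set 0]).
    by rewrite -Rintegral_mkcond Rintegral_set1.
  apply/funext => t; rewrite /patch; case: ifPn => // ht.
  rewrite hD //= orbF; apply/negP => /eqP t0; move: ht; rewrite t0.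
  by rewrite mem_set.
rewrite /= (_ : (fun t => iter_int m.+1 (fun s => D (t :: s))) = (fun _ => 0)).
  by rewrite Rintegral_cst // mul0r.
by apply/funext => t; apply: IH => s hs hh; apply: hD; rewrite /= ?hs // hh orbT.
Qed.

End Integ.

Section Spec.
Variable R : realType.
Variable n : nat.

Definition xs (s : seq R) : 'I_n -> R := fun i => nth 0 s i.
Definition ys (x : 'I_n -> R) : 'I_n -> R := fun i => x i / Num.sqrt (sqnorm x).
Definition Fp (p : poly_n R n) (s : seq R) : R := ind_ball (xs s) * ev (ys (xs s)) p.
Definition Fi (s : seq R) : R := ind_ball (xs s).

Lemma measurable_inv : measurable_fun (setT : set R) GRing.inv.
Proof.
rewrite -(setvU [set (0:R)]).
have c0 : closed [set (0:R)] by apply: compact_closed; [exact: Rhausdorff | exact: finite_compact].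
have m0 : measurable [set (0:R)] by exact: closed_measurable.
have mC : measurable (~` [set (0:R)]) by exact: measurableC.
apply/(measurable_funU _ mC m0); split.
  apply: open_continuous_measurable_fun; first exact: closed_openC.
  move=> x; rewrite inE /= => x0; apply: inv_continuous; exact/eqP.
move=> _ Y mY.
case: (pselect (Y 0)) => Y0.
  rewrite (_ : _ `&` _ = [set 0]); first exact: closed_measurable.
  by apply/seteqP; split => x /=; [case|move=> ->; split => //=; rewrite invr0].
rewrite (_ : _ `&` _ = set0) //.
by apply/seteqP; split => x //= [-> /=]; rewrite invr0.
Qed.

Lemma meas_xs i : measurable_fun setT (fun s : n.-tuple R => xs s i).
Proof.
rewrite (_ : (fun s : n.-tuple R => xs s i) = (fun s => tnth s i)).
  exact: measurable_tnth.
by apply/funext => s; rewrite /xs (tnth_nth 0).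
Qed.

Lemma meas_sqnorm : measurable_fun setT (fun s : n.-tuple R => sqnorm (xs s)).
Proof.
rewrite /sqnorm; apply: measurable_sum => i.
by apply: measurable_funX; exact: meas_xs.
Qed.

Lemma meas_ys i : measurable_fun setT (fun s : n.-tuple R => ys (xs s) i).
Proof.
rewrite /ys; apply: measurable_funM; first exact: meas_xs.
apply: (measurableT_comp measurable_inv).
apply: (measurableT_comp (continuous_measurable_fun (@sqrt_continuous R))).
exact: meas_sqnorm.
Qed.

Lemma meas_ind : measurable_fun setT (fun s : n.-tuple R => Fi s).
Proof.
rewrite /Fi /ind_ball.
apply: measurable_fun_ifT; last 2 first.
- exact: measurable_cst.
- exact: measurable_cst.
apply: measurable_fun_ler; [exact: meas_sqnorm | exact: measurable_cst].
Qed.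

Lemma meas_ev d (T : measurableType d) (f : 'I_n -> T -> R) (p : poly_n R n) :
  (forall i, measurable_fun setT (f i)) ->
  measurable_fun setT (fun t => ev (fun i => f i t) p).
Proof.
move=> mf; rewrite /ev.
rewrite (_ : (fun t => _) = (fun t => \sum_(m <- msupp p) p@_m * \prod_i f i t ^+ m i)).
  apply: measurable_sum => m; apply: measurable_funM; first exact: measurable_cst.
  apply: measurable_prod => i _; exact: measurable_funX.
by apply/funext => t; rewrite mevalE.
Qed.

Lemma meas_Fp p : measurable_fun setT (fun s : n.-tuple R => Fp p s).
Proof.
rewrite /Fp; apply: measurable_funM; first exact: meas_ind.
by apply: meas_ev => i; exact: meas_ys.
Qed.

Lemma sqnorm_ge0 (x : 'I_n -> R) : 0 <= sqnorm x.
Proof. by rewrite /sqnorm; apply: sumr_ge0 => i _; exact: sqr_ge0. Qed.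

Lemma sq_le_sqnorm (x : 'I_n -> R) i : x i ^+ 2 <= sqnorm x.
Proof.
rewrite /sqnorm (bigD1 i) //= lerDl; apply: sumr_ge0 => j _; exact: sqr_ge0.
Qed.

Lemma ys_bound x i : `|ys x i| <= 1.
Proof.
rewrite /ys; have [S0|S0] := eqVneq (sqnorm x) 0.
  by rewrite S0 sqrtr0 invr0 mulr0 normr0 ler01.
have Sp : 0 < sqnorm x by rewrite lt_neqAle eq_sym S0 sqnorm_ge0.
have sp : 0 < Num.sqrt (sqnorm x) by rewrite sqrtr_gt0.
rewrite normrM normfV (gtr0_norm sp) ler_pdivrMr // mul1r.
by rewrite -sqrtr_sqr ler_sqrt ?sqnorm_ge0 // sq_le_sqnorm.
Qed.

Lemma ev_bound (y : 'I_n -> R) (p : poly_n R n) : (forall i, `|y i| <= 1) ->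
  `|ev y p| <= \sum_(m <- msupp p) `|p@_m|.
Proof.
move=> hy; rewrite /ev mevalE; apply: le_trans (ler_norm_sum _ _ _) _.
apply: ler_sum => m _; rewrite normrM; apply: ler_piMr => //.
rewrite normr_prod; apply: prodr_ile1 => i _.
by rewrite normrX exprn_ge0 //= exprn_ile1.
Qed.

Lemma Fi_supp s : size s = n -> has (fun t => 1 < `|t|) s -> Fi s = 0.
Proof.
move=> hsz /(has_nthP 0) [j hj hlt]; rewrite hsz in hj.
rewrite /Fi /ind_ball ifF //; apply/negbTE; rewrite -ltNge.
apply: lt_le_trans (sq_le_sqnorm _ (Ordinal hj)).
rewrite /xs /= -(ger0_norm (sqr_ge0 (nth 0 s j))) normrX.
by rewrite exprn_egt1.
Qed.

Lemma good_Fi : good n Fi.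
Proof.
split.
- by exists 1 => s; rewrite /Fi /ind_ball; case: ifP; rewrite ?normr1 ?normr0.
- exact: Fi_supp.
- exact: meas_ind.
Qed.

Lemma good_Fp p : good n (Fp p).
Proof.
split.
- exists (\sum_(m <- msupp p) `|p@_m|) => s; rewrite /Fp normrM.
  have hi : `|ind_ball (xs s)| <= 1 by rewrite /ind_ball; case: ifP; rewrite ?normr1 ?normr0.
  have hv := ev_bound p (ys_bound (xs s)).
  by apply: le_trans (ler_pM (normr_ge0 _) (normr_ge0 _) hi hv) _; rewrite mul1r.
- by move=> s hs hh; rewrite /Fp -/(Fi s) Fi_supp ?mul0r.
- exact: meas_Fp.
Qed.

End Spec.

Section Main.
Variable R : realType.
Variables n k : nat.

Local Notation r := (r2k R n k).
Definition Ip (p : poly_n R n) := iter_int n (Fp p).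
Definition J := iter_int n (Fi (R:=R) n).

Lemma avgE f : avg f = Ip f / J.
Proof. by []. Qed.

Lemma innerE (f g : poly_n R n) : inner f g = avg (f * g).
Proof. by rewrite /inner /avg; congr sph_int; apply/funext => x; rewrite /ev mevalM. Qed.

Lemma IpD p q : Ip (p + q) = Ip p + Ip q.
Proof.
rewrite /Ip -(iter_intD (good_Fp p) (good_Fp q)); congr (iter_int _ _); apply/funext => s.
by rewrite /Fp /ev mevalD mulrDr.
Qed.

Lemma IpZ c p : Ip (c *: p) = c * Ip p.
Proof.
rewrite /Ip -(iter_intZ c (good_Fp p)); congr (iter_int _ _); apply/funext => s.
by rewrite /Fp /ev mevalZ mulrCA.
Qed.

Lemma IpN p : Ip (- p) = - Ip p.
Proof. by rewrite -scaleN1r IpZ mulN1r. Qed.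

Lemma IpB p q : Ip (p - q) = Ip p - Ip q.
Proof. by rewrite IpD IpN. Qed.

Lemma Ip2 p : Ip (p *+ 2) = 2 * Ip p.
Proof. by rewrite mulr2n IpD mulr2n mulrDl !mul1r. Qed.

Lemma ev_r (x : 'I_n -> R) : ev x r = sqnorm x ^+ k.
Proof.
rewrite /ev /r2k rmorphXn raddf_sum /sqnorm; congr (_ ^+ _).
by apply: eq_bigr => i _; rewrite /= !expr2 mevalM mevalXU.
Qed.

Lemma ev_r_ge0 x : 0 <= ev x r.
Proof. by rewrite ev_r exprn_ge0 // sqnorm_ge0. Qed.

Lemma ev_r_ys (x : 'I_n -> R) : sqnorm x != 0 -> ev (ys x) r = 1.
Proof.
move=> S0; rewrite ev_r; have Sp : 0 < sqnorm x by rewrite lt_neqAle eq_sym S0 sqnorm_ge0.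
suff -> : sqnorm (ys x) = 1 by rewrite expr1n.
rewrite /sqnorm /ys.
rewrite (eq_bigr (fun i => x i ^+ 2 / sqnorm x)); last first.
  by move=> i _; rewrite exprMn exprVn sqr_sqrtr // ltW.
by rewrite -mulr_suml -/(sqnorm x) divff.
Qed.

Lemma ys0 (x : 'I_n -> R) : sqnorm x = 0 -> ys x = (fun _ => 0).
Proof. by move=> S0; apply/funext => i; rewrite /ys S0 sqrtr0 invr0 mulr0. Qed.

Lemma r_in_P : @P R n k r.
Proof.
rewrite /P /= /r2k.
apply: dhomogMn; apply: rpred_sum => i _.
by rewrite mpolyXn dhomogX; apply/eqP; rewrite -[LHS]/(mdeg _) mdegMn mdeg1.
Qed.

Lemma ev0 f : @P R n k f -> (0 < k)%N -> ev (fun _ : 'I_n => 0 : R) f = 0.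
Proof.
move=> Pf k0; rewrite /ev mevalE big_seq big1 // => m hm.
have dm := dhomog_mf Pf hm.
have [i hi] : exists i, m i != 0%N.
  case: (boolP [exists i, m i != 0%N]) => [/existsP //|/existsPn hall].
  move: dm; rewrite -[X in X = _]/(mdeg _) mdegE big1 => [|i _]; last exact/eqP/negPn/hall.
  by move=> /esym /eqP; rewrite muln_eq0 /=; move: k0; rewrite lt0n => /negbTE ->.
by rewrite (bigD1 i) //= expr0n (negbTE hi) mul0r mulr0.
Qed.

Lemma Fp_mulr f : @P R n k f -> (0 < k)%N -> Fp (f * r) = Fp f.
Proof.
move=> Pf k0; apply/funext => s; rewrite /Fp /ev mevalM -/(ev _ r).
have [S0|S0] := eqVneq (sqnorm (xs (n:=n) s)) 0.
  by rewrite ys0 // -/(ev _ f) ev0 // !mul0r !mulr0.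
by rewrite ev_r_ys // mulr1.
Qed.

Lemma Ip_mulr f : @P R n k f -> (0 < k)%N -> Ip (f * r) = Ip f.
Proof. by move=> Pf k0; rewrite /Ip Fp_mulr. Qed.

Lemma Ip_r : (0 < n)%N -> Ip r = J.
Proof.
move=> n0; apply/eqP; rewrite -subr_eq0; apply/eqP.
rewrite /Ip /J -mulN1r -(iter_intZ (-1) (good_Fi R n)).
rewrite -(iter_intD (good_Fp _) (goodZ (-1) (good_Fi R n))).
have := @iter_int_pt R n.-1 (fun s => Fp r s + -1 * Fi n s); rewrite prednK //.
apply => s hs hh.
have S0 : sqnorm (xs (n:=n) s) != 0.
  move/(has_nthP 0): hh => [j hj hj0]; rewrite hs in hj.
  rewrite lt0r_neq0 // lt_neqAle sqnorm_ge0 andbT eq_sym.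
  apply/negP => /eqP S0; move: (sq_le_sqnorm (xs s) (Ordinal hj)); rewrite S0.
  rewrite /xs /= => h; move: hj0; rewrite -sqrf_eq0 => /negP; apply.
  by rewrite eq_le h sqr_ge0.
by rewrite /Fp /Fi ev_r_ys // mulr1 mulN1r subrr.
Qed.

Lemma Ip_ge0 g : (forall x, 0 <= ev x g) -> 0 <= Ip g.
Proof.
move=> g0; apply: iter_int_ge0 => s; rewrite /Fp; apply: mulr_ge0 => //.
by rewrite /ind_ball; case: ifP.
Qed.

Lemma J_ge0 : 0 <= J.
Proof. by apply: iter_int_ge0 => s; rewrite /Fi /ind_ball; case: ifP. Qed.

End Main.

Lemma Ip_polar (R : realType) n k (f g : poly_n R n) : @P R n k f -> @P R n k g -> (0 < k)%N ->
  Ip ((f - r2k R n k) * (g - r2k R n k)) = Ip (f * g) - Ip f - Ip g + Ip (r2k R n k).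
Proof.
move=> Pf Pg k0.
rewrite mulrBl !mulrBr !IpB (Ip_mulr Pf) // (mulrC (r2k R n k) g) (Ip_mulr Pg) //.
rewrite (Ip_mulr (r_in_P R n k)) //; ring.
Qed.

Theorem lemma5p1 (R : realType) (n k : nat) (hn : (2 <= n)%N) (hk : (1 <= k)%N) :
  @polar_Cbar R n k = [set - h + @r2k R n k *+ 2 | h in @Cstarbar R n k].
Proof.
have n0 : (0 < n)%N by apply: leq_trans hn.
have Pr := r_in_P R n k.
set r := r2k R n k.
have Ir : Ip r = J R n by exact: Ip_r.
have [J0|Jne] := eqVneq (J R n) 0.
  have avg0 : forall f : poly_n R n, avg f = 0 by move=> f; rewrite avgE J0 invr0 mulr0.
  apply/seteqP; split => f /=.
    by case=> [[_ hf] _]; move: hf; rewrite avg0 => /eqP; rewrite eq_sym oner_eq0.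
  by case=> h [_ [_ hh]] _; move: hh; rewrite avg0 => /eqP; rewrite eq_sym oner_eq0.
have Jp : 0 < J R n by rewrite lt_neqAle eq_sym Jne J_ge0.
set JJ := J R n in Ir Jp Jne *.
have avgP : forall f : poly_n R n, (avg f = 1) <-> (Ip f = JJ).
  move=> f; rewrite avgE; split => [h|h]; last by rewrite h divff.
  by rewrite -(divfK Jne (Ip f)) h mul1r.
have le1P : forall x : R, (x / JJ <= 1) = (x <= JJ).
  by move=> x; rewrite ler_pdivrMr // mul1r.
have ge0P : forall x : R, (0 <= x / JJ) = (0 <= x).
  by move=> x; rewrite pmulr_lge0 // invr_gt0.
apply/seteqP; split => f /=.
- case=> [[Pf /avgP If] pol].
  exists (r *+ 2 - f); last by rewrite opprB subrK.
  have Ph : @P R n k (r *+ 2 - f) by apply: rpredB => //; exact: rpredMn.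
  have Ih : Ip (r *+ 2 - f) = JJ by rewrite IpB Ip2 Ir If; ring.
  split; last by split => //; apply/avgP.
  split => // g [Pg g0].
  rewrite innerE avgE ge0P.
  set a := Ip g.
  have a0 : 0 <= a by apply: Ip_ge0.
  have key : forall e : R, 0 < e -> 0 <= Ip ((r *+ 2 - f) * g) + e * JJ.
    move=> e e0.
    have ae : 0 < a + e * JJ by apply: ltr_wpDl => //; exact: mulr_gt0.
    set c := JJ / (a + e * JJ).
    have c0 : 0 < c by apply: divr_gt0.
    set g' := c *: (g + e *: r).
    have Pg' : @P R n k g' by apply: rpredZ; apply: rpredD => //; exact: rpredZ.
    have Ig' : Ip g' = JJ.
      by rewrite /g' IpZ IpD IpZ Ir /c -/a mulrAC -mulrA divff ?mulr1 // gt_eqF.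
    have Cg' : @Cbar R n k g'.
      split; last by split => //; apply/avgP.
      split => // x; rewrite /g' /ev mevalZ mevalD mevalZ.
      apply: mulr_ge0; first exact: ltW.
      apply: addr_ge0; first exact: g0.
      by apply: mulr_ge0; [exact: ltW | exact: ev_r_ge0].
    have := pol g' Cg'; rewrite innerE avgE le1P Ip_polar // If Ig' Ir => hfg.
    have hhg' : 0 <= Ip ((r *+ 2 - f) * g').
      rewrite mulrBl IpB mulrnAl Ip2 (mulrC r g') (Ip_mulr Pg') // Ig'.
      by move: hfg; lra.
    move: hhg'; rewrite /g' -scalerAr IpZ mulrDr IpD -scalerAr IpZ.
    rewrite mulrC (Ip_mulr Ph) // Ih => hh.
    by move: hh; rewrite pmulr_lge0 // mulrC.
  rewrite leNgt; apply/negP => hneg.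
  have := key (- Ip ((r *+ 2 - f) * g) / (2 * JJ)).
  have e0 : 0 < - Ip ((r *+ 2 - f) * g) / (2 * JJ).
    by apply: divr_gt0; [rewrite oppr_gt0 | exact: mulr_gt0].
  move/(_ e0).
  move: hneg; set t := Ip _ => hneg.
  have -> : - t / (2 * JJ) * JJ = - t / 2 by field; rewrite Jne.
  lra.
- case=> h [[Ph hc] [_ /avgP Ih]] <-.
  have Pf : @P R n k (- h + r *+ 2) by apply: rpredD; [rewrite /P /= rpredN | exact: rpredMn].
  have If : Ip (- h + r *+ 2) = JJ by rewrite IpD IpN Ip2 Ir Ih; ring.
  split; first by split => //; apply/avgP.
  move=> g [[Pg g0] [_ /avgP Ig]].
  have := hc g (conj Pg g0); rewrite innerE avgE ge0P => hhg.
  rewrite innerE avgE le1P Ip_polar // If Ig Ir.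
  rewrite mulrDl IpD mulNr IpN mulrnAl Ip2 (mulrC r g) (Ip_mulr Pg) // Ig.
  lra.
Qed.
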